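(* Let $d\ge1$ and let $\Psi$, $B$, $b$ satisfy the standing assumptions (A1)–(A4) in the context, and for $h>0$ let $b_h(t,x)=\frac{b(t,x)}{1+h|b(t,x)|}$. Then there exists $h_{\max}>0$ such that $$\lim_{r\to\infty}\ \sup_{|x|\ge r,\ t\ge0,\ 0<h\le h_{\max}}\Big(2\Big\langle\frac{x}{|x|},b_h(t,x)\Big\rangle+\frac{h}{|x|}|b_h(t,x)|^2\Big)<0.$$
   Context: $|\cdot|$ is the Euclidean norm on vectors and the operator norm on matrices; $a\vee b=\max\{a,b\}$; $\operatorname{div}B$ is the row-wise divergence $(\operatorname{div}B)_i=\sum_j\partial_{x_j}B_{ij}$. Standing assumptions: (A1) $\Psi\in C^2(\mathbb{R}^d)$, $\nabla\Psi$ $L$-Lipschitz, $\nabla\Psi(0)=0$. (A2) $B:[0,\infty)\times\mathbb{R}^d\to\mathbb{R}^{d\times d}$ symmetric with $\beta_lI\preceq B(t,x)\preceq\beta_uI$, $\beta_l,\beta_u>0$. (A3) $B$ is $C^2$ in $x$ and there are $L,n_B>0$, $\delta\ge1/2$ with, for all $x,y$, $s,t>0$: $|B(t,x)-B(t,y)|\vee|\operatorname{div}B(t,x)-\operatorname{div}B(t,y)|\le L(1+|x|^{n_B}+|y|^{n_B})|x-y|$ and $|B(s,x)-B(t,x)|\vee|\operatorname{div}B(s,x)-\operatorname{div}B(t,x)|\le L(1+|x|^{n_B})|s-t|^\delta$. (A4) $b(t,x)=-B(t,x)\nabla\Psi(x)+\operatorname{div}B(t,x)$ satisfies $\lim_{r\to\infty}\sup_{|x|\ge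 r,t\ge0}\langle\frac{x}{|x|},\frac{b(t,x)}{|b(t,x)|}\rangle<0$ and $\lim_{r\to\infty}\inf_{|x|\ge r,t\ge0}|b(t,x)|=\infty$. *)

(* Defs.v *)
From HB Require Import structures.
From mathcomp Require Import all_boot all_order all_algebra.
From mathcomp Require Import all_classical all_reals all_analysis.
Set Implicit Arguments. Unset Strict Implicit. Unset Printing Implicit Defensive.
Import Order.TTheory GRing.Theory Num.Theory.
Import numFieldNormedType.Exports.
Local Open Scope classical_set_scope.
Local Open Scope ring_scope.

Section Defs.
Variables (R : realType) (d : nat).

(* Euclidean inner product and norm on R^d (the library norm on 'rV is the max norm) *)
Definition dotv (u v : 'rV[R]_d) : R := \sum_(i < d) u 0 i * v 0 i.
Definition enorm (v : 'rV[R]_d) : R := Num.sqrt (dotv v v).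

Definition opnorm (A : 'M[R]_d) : R :=
  sup [set enorm (A *m v^T)^T | v in [set v : 'rV[R]_d | enorm v <= 1]].

Definition ev (i : 'I_d) : 'rV[R]_d := delta_mx 0 i.
Definition partial (i : 'I_d) (f : 'rV[R]_d -> R) (x : 'rV[R]_d) : R :=
  'D_(ev i) f x.

Definition C2 (f : 'rV[R]_d -> R) : Prop :=
  [/\ continuous f,
      (forall i x, derivable f x (ev i)),
      (forall i, continuous (partial i f)),
      (forall i j x, derivable (partial i f) x (ev j)) &
      (forall i j, continuous (partial j (partial i f)))].

Definition grad (f : 'rV[R]_d -> R) (x : 'rV[R]_d) : 'rV[R]_d :=
  \row_i partial i f x.

Definition divB (B : R -> 'rV[R]_d -> 'M[R]_d) (t : R) (x : 'rV[R]_d) : 'rV[R]_d :=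
  \row_i \sum_(j < d) partial j (fun y => B t y i j) x.

Definition drift (Psi : 'rV[R]_d -> R) (B : R -> 'rV[R]_d -> 'M[R]_d)
  (t : R) (x : 'rV[R]_d) : 'rV[R]_d :=
  - (B t x *m (grad Psi x)^T)^T + divB B t x.

Definition tamed (b : R -> 'rV[R]_d -> 'rV[R]_d) (h t : R) (x : 'rV[R]_d) : 'rV[R]_d :=
  (1 + h * enorm (b t x))^-1 *: b t x.

Definition unitv (v : 'rV[R]_d) : 'rV[R]_d := (enorm v)^-1 *: v.

Definition dir_sup (b : R -> 'rV[R]_d -> 'rV[R]_d) (r : R) : \bar R :=
  ereal_sup [set y : \bar R | exists x t, r <= enorm x /\ 0 <= t /\
     y = (dotv (unitv x) (unitv (b t x)))%:E].

Definition norm_inf (b : R -> 'rV[R]_d -> 'rV[R]_d) (r : R) : \bar R :=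
  ereal_inf [set y : \bar R | exists x t, r <= enorm x /\ 0 <= t /\
     y = (enorm (b t x))%:E].

Definition tamed_sup (b : R -> 'rV[R]_d -> 'rV[R]_d) (hmax r : R) : \bar R :=
  ereal_sup [set y : \bar R | exists x t h, r <= enorm x /\ 0 <= t /\
     0 < h <= hmax /\
     y = (2 * dotv (unitv x) (tamed b h t x)
          + h / enorm x * enorm (tamed b h t x) ^+ 2)%:E].

End Defs.

(* Main.v *)
Require Import Defs.
From HB Require Import structures.
From mathcomp Require Import all_boot all_order all_algebra.
From mathcomp Require Import all_classical all_reals all_analysis.
From mathcomp Require Import ring lra.
Import Order.TTheory GRing.Theory Num.Theory.
Import numFieldNormedType.Exports.
Local Open Scope classical_set_scope.
Local Open Scope ring_scope.

Section H.
Variables (R : realType) (d : nat).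
Implicit Types (u v : 'rV[R]_d).

Lemma dotvZr u v (a : R) : dotv u (a *: v) = a * dotv u v.
Proof. rewrite /dotv mulr_sumr; apply: eq_bigr => i _; rewrite mxE; by rewrite mulrCA. Qed.
Lemma dotvZl u v (a : R) : dotv (a *: u) v = a * dotv u v.
Proof. rewrite /dotv mulr_sumr; apply: eq_bigr => i _; rewrite mxE; by rewrite mulrA. Qed.
Lemma dotv_ge0 v : 0 <= dotv v v.
Proof. apply: sumr_ge0 => i _; by rewrite -expr2 sqr_ge0. Qed.
Lemma enorm_sq v : enorm v ^+ 2 = dotv v v.
Proof. by rewrite /enorm sqr_sqrtr // dotv_ge0. Qed.
Lemma enorm_ge0 v : 0 <= enorm v.
Proof. exact: sqrtr_ge0. Qed.
Lemma key (b : R -> 'rV[R]_d -> 'rV[R]_d) x t h m :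
  m < 0 -> 1 <= enorm (b t x) -> dotv (unitv x) (unitv (b t x)) <= m ->
  - m^-1 <= enorm x -> 0 < h <= 1 ->
  2 * dotv (unitv x) (tamed b h t x) + h / enorm x * enorm (tamed b h t x) ^+ 2 <= m / 2.
Proof.
move=> m0 nb1 Dm nxm /andP[h0 h1].
set nb := enorm (b t x) in nb1 *; set nx := enorm x in nxm *.
set D := dotv _ _ in Dm.
have im0 : 0 < - m^-1 by rewrite oppr_gt0 invr_lt0.
have nx0 : 0 < nx by apply: lt_le_trans nxm.
have nbp : 0 <= nb by apply: le_trans nb1.
have q0 : 0 < 1 + h * nb by have := mulr_ge0 (ltW h0) nbp; lra.
have nb0 : nb != 0 by rewrite gt_eqF // (lt_le_trans ltr01).
set k := (1 + h * nb)^-1.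
have E1 : dotv (unitv x) (tamed b h t x) = k * nb * D.
  rewrite /tamed dotvZr -mulrA; congr (_ * _).
  by rewrite /D /unitv dotvZr mulrA mulfV // mul1r.
have E2 : enorm (tamed b h t x) ^+ 2 = (k * nb) ^+ 2.
  by rewrite enorm_sq /tamed dotvZl dotvZr -enorm_sq -/nb; rewrite exprMn expr2 mulrA.
rewrite E1 E2.
set K := k * nb.
have Kq : K * (1 + h * nb) = nb by rewrite /K mulrAC mulVf ?mul1r // gt_eqF.
have K0 : 0 < K by rewrite /K mulr_gt0 // ?invr_gt0 // (lt_le_trans ltr01).
have K2 : 1/2 <= K.
  have : 1 + h * nb <= 2 * nb by nra.
  move=> H; rewrite ler_pdivrMr //; nra.
have hK : h * K <= 1 by nra.
have ix0 : 0 < nx^-1 by rewrite invr_gt0.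
have mi : m * m^-1 = 1 by rewrite mulfV // lt_eqF.
have xi : nx * nx^-1 = 1 by rewrite mulfV // gt_eqF.
have S0 : 1 <= - m * nx by nra.
have ix : nx^-1 <= - m by nra.
have S1 : h / nx * K ^+ 2 = (h * K) * (K * nx^-1) by rewrite expr2; ring.
have S2 : (h * K) * (K * nx^-1) <= K * nx^-1 by have := mulr_gt0 K0 ix0; nra.
have S3 : K * nx^-1 <= K * (- m) by rewrite ler_pM2l.
rewrite S1.
nra.
Qed.
End H.

Theorem lemma12 (R : realType) (d : nat) (hd : (1 <= d)%N)
  (Psi : 'rV[R]_d -> R) (B : R -> 'rV[R]_d -> 'M[R]_d)
  (L nB delta beta_l beta_u : R)
  (* (A1) *)
  (hPsiC2 : C2 Psi)
  (hPsiLip : forall x y, enorm (grad Psi x - grad Psi y) <= L * enorm (x - y))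
  (hPsi0 : grad Psi 0 = 0)
  (* (A2) *)
  (hbl : 0 < beta_l) (hbu : 0 < beta_u)
  (hBsym : forall t x, 0 <= t -> (B t x)^T = B t x)
  (hBell : forall t x, 0 <= t -> forall v : 'rV[R]_d,
     beta_l * enorm v ^+ 2 <= dotv v (B t x *m v^T)^T /\
     dotv v (B t x *m v^T)^T <= beta_u * enorm v ^+ 2)
  (* (A3) *)
  (hBC2 : forall t, 0 <= t -> forall i j, C2 (fun y => B t y i j))
  (hL : 0 < L) (hnB : 0 < nB) (hdelta : 2^-1 <= delta)
  (hBlipx : forall x y t, 0 < t ->
     Num.max (opnorm (B t x - B t y)) (enorm (divB B t x - divB B t y))
     <= L * (1 + enorm x `^ nB + enorm y `^ nB) * enorm (x - y))
  (hBholt : forall x s t, 0 < s -> 0 < t ->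
     Num.max (opnorm (B s x - B t x)) (enorm (divB B s x - divB B t x))
     <= L * (1 + enorm x `^ nB) * `|s - t| `^ delta)
  (* (A4) *)
  (hA4dir : exists l : \bar R,
     (dir_sup (drift Psi B) r @[r --> +oo] --> l) /\ (l < 0%:E)%E)
  (hA4norm : norm_inf (drift Psi B) r @[r --> +oo] --> +oo%E)
  : exists hmax : R, 0 < hmax /\
    exists l : \bar R,
      (tamed_sup (drift Psi B) hmax r @[r --> +oo] --> l) /\ (l < 0%:E)%E.
Proof.
set b := drift Psi B.
have [l [hl l0]] := hA4dir.
have [m [m0 lm]] : exists m : R, m < 0 /\ (l < m%:E)%E.
  case: l hl l0 => [s| |] _ l0.
  - rewrite lte_fin in l0; exists (s/2); split; [lra | rewrite lte_fin; lra].
  - by [].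
  - by exists (-1); split; [lra | rewrite ltNyr].
have ev1 : \forall r \near +oo, (dir_sup b r < m%:E)%E := hl _ (open_ereal_lt' lm).
have ev2 : \forall r \near +oo, (1%:E < norm_inf b r)%E.
  by apply: (cvgey_gtr hA4norm); exact: num_real.
have [M [_ HM]] := filterI ev1 ev2.
set r1 := M + 1.
have [Hd1 Hn1] : (dir_sup b r1 < m%:E)%E /\ (1%:E < norm_inf b r1)%E.
  by apply: HM; rewrite /r1; lra.
set r2 := Num.max r1 (- m^-1).
exists 1; split => //.
set f := fun r => tamed_sup b 1 r.
have fni : {homo f : n m / n <= m >-> (m <= n)%E}.
  move=> p q pq; apply: le_ereal_sup => y [x [t [h [H1 [H2 [H3 H4]]]]]].
  by exists x, t, h; split => //; exact: le_trans pq H1.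
exists (ereal_inf (range f)); split; first exact: nonincreasing_cvge.
apply: (@le_lt_trans _ _ (f r2)); first by apply: ereal_inf_lbound; exists r2.
apply: (@le_lt_trans _ _ (m/2)%:E); last by rewrite lte_fin; lra.
apply: ub_ereal_sup => _ [x [t [h [Hx [Ht [Hh ->]]]]]].
have Hx1 : r1 <= enorm x by apply: le_trans Hx; rewrite le_max lexx.
have Hx2 : - m^-1 <= enorm x by apply: le_trans Hx; rewrite le_max lexx orbT.
rewrite lee_fin; apply: key => //.
- rewrite -lee_fin; apply: (le_trans (ltW Hn1)); apply: ereal_inf_lbound.
  by exists x, t.
- rewrite -lee_fin; apply: (le_trans _ (ltW Hd1)); apply: ereal_sup_ubound.
  by exists x, t.
Qed.
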